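(* Let $\Sigma=\{0,1\}$ and $(p_{ij})_{i,j\in\Sigma}$ a transition matrix with $p_{ij}\in(0,1)$ for all $i,j$ and $p_{ij}\ne\tfrac12$ for some $(i,j)$. For a probability distribution $\mu$ on $\Sigma$ let $B_n^\mu$ be the number of bucket operations of radix sort on $n$ i.i.d. strings from the Markov source with initial distribution $\mu$ and transition matrix $(p_{ij})$. Then $$\mathbb E[B_n^\mu]=\frac1H n\log n+O(n)\qquad(n\to\infty),$$ where the $O(n)$ error term is uniform in the initial distribution $\mu$.
   Context: Markov source: each string $\xi_1\xi_2\ldots$ has $\mathbb P(\xi_1=j)=\mu_j$ and $\mathbb P(\xi_{k+1}=j\mid\xi_k=i)=p_{ij}$; strings are independent. $B_n^\mu=\sum_{j=1}^nD_j$ with $D_j$ the smallest $k\ge0$ such that no other string shares its first $k$ symbols (external path length of the trie). $\pi_0=p_{10}/(p_{01}+p_{10})$, $\pi_1=p_{01}/(p_{01}+p_{10})$, $H_i=-\sum_jp_{ij}\log p_{ij}$, $H=\pi_0H_0+\pi_1H_1$. *)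

(* Defs.v *)
From HB Require Import structures.
From mathcomp Require Import all_boot all_order all_algebra.
From mathcomp Require Import all_classical all_reals all_analysis.
Set Implicit Arguments. Unset Strict Implicit. Unset Printing Implicit Defensive.
Import Order.TTheory GRing.Theory Num.Theory.
Local Open Scope classical_set_scope.
Local Open Scope ring_scope.

(* Alphabet Sigma = {0,1} is encoded as bool (false = 0, true = 1).
   A string is an infinite sequence  nat -> bool. *)

(* stationary probabilities *)
Definition pi0 {R : realType} (p : bool -> bool -> R) : R :=
  p true false / (p false true + p true false).
Definition pi1 {R : realType} (p : bool -> bool -> R) : R :=
  p false true / (p false true + p true false).

Definition Hi {R : realType} (p : bool -> bool -> R) (i : bool) : R :=
  - (p i false * ln (p i false) + p i true * ln (p i true)).

Definition entropy {R : realType} (p : bool -> bool -> R) : R :=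
  pi0 p * Hi p false + pi1 p * Hi p true.

Definition markov_prefix_prob {R : realType} (mu : bool -> R)
  (p : bool -> bool -> R) (k : nat) (w : nat -> bool) : R :=
  if k is k'.+1 then
    mu (w 0%N) * \prod_(l < k') p (w l) (w l.+1)
  else 1.

(* X : 'I_n -> T -> nat -> bool is a family of n independent strings, each
   emitted by the Markov source (mu, p), on the probability space (T, P):
   the coordinates are measurable and, for every k, the joint law of the
   length-k prefixes is the product of the Markov prefix laws. *)
Definition is_markov_strings {R : realType} (mu : bool -> R)
  (p : bool -> bool -> R) (n : nat) {d : measure_display}
  {T : measurableType d} (P : probability T R)
  (X : 'I_n -> T -> nat -> bool) : Prop :=
  (forall (j : 'I_n) (l : nat), measurable [set w | X j w l]) /\
  (forall (k : nat) (s : 'I_n -> nat -> bool),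
     P [set w | forall (j : 'I_n) (l : nat), (l < k)%N -> X j w l = s j l]
     = (\prod_(j < n) markov_prefix_prob mu p k (s j))%:E).

(* D_j = smallest k >= 0 such that no other string shares its first k
   symbols with string j (+oo if there is no such k). *)
Definition depth (R : realType) {T : Type} (n : nat)
  (X : 'I_n -> T -> nat -> bool) (j : 'I_n) (w : T) : \bar R :=
  ereal_inf [set (k%:R)%:E | k in
    [set k : nat | forall i : 'I_n, i != j ->
        exists l : nat, (l < k)%N /\ X i w l != X j w l]].

(* B_n = sum_j D_j : external path length of the trie = number of bucket
   operations of radix sort. *)
Definition bucket_ops (R : realType) {T : Type} (n : nat)
  (X : 'I_n -> T -> nat -> bool) (w : T) : \bar R :=
  (\sum_(j < n) depth R X j w)%E.

(* Main.v *)
Require Import Defs.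
From HB Require Import structures.
From mathcomp Require Import all_boot all_order all_algebra.
From mathcomp Require Import all_classical all_reals all_analysis.
From mathcomp Require Import ring lra measurable_realfun.
Import Order.TTheory GRing.Theory Num.Theory.
Local Open Scope classical_set_scope.
Local Open Scope ring_scope.

Section Analytic.
Variable R : realType.

Lemma bern_le (q : R) (m : nat) : 0 <= q <= 1 -> 1 - m%:R * q <= (1 - q) ^+ m.
Proof.
move=> /andP[q0 q1]; elim: m => [|m IH]; first by rewrite expr0 mul0r subr0.
rewrite exprS.
have h1 : 0 <= 1 - q by lra.
have := ler_wpM2l h1 IH.
have m0 : 0 <= m%:R :> R by [].
have : 0 <= m%:R * q * q :> R by rewrite mulr_ge0 // mulr_ge0.
rewrite -natr1. nra.
Qed.

Lemma bern_inv (q : R) (m : nat) : 0 <= q <= 1 -> (1 - q) ^+ m * (1 + m%:R * q) <= 1.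
Proof.
move=> /andP[q0 q1]; elim: m => [|m IH]; first by rewrite expr0 mul0r addr0 mul1r.
rewrite exprS -natr1.
have h0 : 0 <= (1 - q) ^+ m by apply: exprn_ge0; lra.
have m0 : 0 <= m%:R :> R by [].
have : (1 - q) * (1 + (m%:R + 1) * q) <= 1 + m%:R * q by nra.
move=> h; have := ler_wpM2l h0 h. nra.
Qed.

End Analytic.

Section Analytic2.
Variable R : realType.
Variable p : bool -> bool -> R.
Hypothesis hp : forall i j, 0 < p i j < 1.
Hypothesis hs : forall i, p i false + p i true = 1.

Definition rho := Num.max (Num.max (p false false) (p false true))
                          (Num.max (p true false) (p true true)).
Definition dlt := Num.min (Num.min (p false false) (p false true))
                          (Num.min (p true false) (p true true)).

Lemma p_le_rho i j : p i j <= rho.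
Proof. rewrite /rho; case: i; case: j; rewrite !le_max ?lexx ?orbT //. Qed.

Lemma rho_lt1 : rho < 1.
Proof.
rewrite /rho !gt_max; have := hp; move=> h.
by rewrite !(andP (h _ _)).2.
Qed.

Lemma dlt_le_p i j : dlt <= p i j.
Proof. rewrite /dlt; case: i; case: j; rewrite !ge_min ?lexx ?orbT //. Qed.

Lemma dlt_gt0 : 0 < dlt.
Proof. by rewrite /dlt !lt_min !(andP (hp _ _)).1. Qed.

Lemma Hi_gt0 i : 0 < Hi p i.
Proof.
rewrite /Hi oppr_gt0.
have a := hp i false; have b := hp i true.
have la : ln (p i false) < 0 by apply: ln_lt0.
have lb : ln (p i true) < 0 by apply: ln_lt0.
move: a b => /andP[a0 a1] /andP[b0 b1].
have : p i false * ln (p i false) < 0 by rewrite pmulr_rlt0.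
have : p i true * ln (p i true) < 0 by rewrite pmulr_rlt0.
lra.
Qed.

Lemma den_gt0 : 0 < p false true + p true false.
Proof. by rewrite addr_gt0 // (andP (hp _ _)).1. Qed.

Lemma H_gt0 : 0 < entropy p.
Proof.
rewrite /entropy /pi0 /pi1.
have d := den_gt0.
have a := (andP (hp false true)).1; have b := (andP (hp true false)).1.
have h0 := Hi_gt0 false; have h1 := Hi_gt0 true.
rewrite addr_gt0 // mulr_gt0 // divr_gt0 //.
Qed.

Definition hh (i : bool) : R :=
  if i then 0 else (Hi p true - Hi p false) / (p false true + p true false).

Lemma poisson i :
  hh i - (p i false * hh false + p i true * hh true) = entropy p - Hi p i.
Proof.
have d := den_gt0; have dn : p false true + p true false != 0 by rewrite gt_eqF.
have h0 := hs false; have h1 := hs true.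
rewrite /hh /entropy /pi0 /pi1; case: i => /=.
  by field.
rewrite (_ : p false false = 1 - p false true); last by lra.
by field.
Qed.


Notation HH := (entropy p).

Definition hM := `|hh false| + `|hh true|.
Lemma hh_le i : hh i <= hM.
Proof. rewrite /hM; case: i; [have := ler_norm (hh true)|have := ler_norm (hh false)];
  have := normr_ge0 (hh true); have := normr_ge0 (hh false); lra. Qed.
Lemma hh_ge i : - hM <= hh i.
Proof. rewrite /hM; case: i; [have := ler_normr (hh true) | have := ler_normr (hh false)];
  rewrite ?lexx ?orbT => _; [have := ler_norm (- hh true) | have := ler_norm (- hh false)];
  rewrite normrN; have := normr_ge0 (hh true); have := normr_ge0 (hh false); lra. Qed.
Lemma hM_ge0 : 0 <= hM.
Proof. by rewrite addr_ge0. Qed.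

Lemma key i x a :
  p i false * ((ln x + ln (p i false) + hh false) / HH + a) +
  p i true * ((ln x + ln (p i true) + hh true) / HH + a) =
  (ln x + hh i) / HH - 1 + a.
Proof.
have H0 : HH != 0 by rewrite gt_eqF // H_gt0.
have e := poisson i.
have e2 := hs i.
have e3 : p i false * ln (p i false) + p i true * ln (p i true) = - Hi p i.
  by rewrite /Hi opprK.
rewrite (_ : _ + _ = ((p i false + p i true) * ln x + (p i false * ln (p i false) + p i true * ln (p i true))
   + (p i false * hh false + p i true * hh true)) / HH + (p i false + p i true) * a); last by field.
rewrite e2 e3 (_ : p i false * hh false + p i true * hh true = hh i - HH + Hi p i); last by lra.
by field.
Qed.


Variable n : nat.
Hypothesis n2 : (2 <= n)%N.

Definition ff (q : R) := 1 - (1 - q) ^+ n.-1.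

Fixpoint Phi (K : nat) (q : R) (i : bool) : R :=
  if K is K'.+1 then ff q + (p i false * Phi K' (q * p i false) false +
                             p i true * Phi K' (q * p i true) true)
  else 0.

Lemma n_gt0 : 0 < n%:R :> R.
Proof. by rewrite ltr0n; case: n n2. Qed.

Lemma ff_ge0 q : 0 <= q <= 1 -> 0 <= ff q.
Proof. move=> /andP[q0 q1]; rewrite /ff subr_ge0 exprn_ile1 //; lra. Qed.

Lemma ff_le1 q : 0 <= q <= 1 -> ff q <= 1.
Proof. move=> /andP[q0 q1]; rewrite /ff lerBlDr lerDl exprn_ge0 //; lra. Qed.

Lemma ff_le q : 0 <= q <= 1 -> ff q <= n%:R * q.
Proof.
move=> hq; have := @bern_le R q n.-1 hq; rewrite /ff.
have : (n.-1)%:R <= n%:R :> R by rewrite ler_nat leq_pred.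
move: hq => /andP[q0 q1] h1; have := ler_wpM2r q0 h1. lra.
Qed.

Lemma ff_ge q : 0 < q <= 1 -> 1 <= n%:R * q -> 1 - 2 / (n%:R * q) <= ff q.
Proof.
move=> /andP[q0 q1] x1.
have hq : 0 <= q <= 1 by rewrite q1 ltW.
have := @bern_inv R q n.-1 hq.
have nx : n%:R = (n.-1)%:R + 1 :> R by rewrite natr1 prednK //; case: n n2.
have m1 : 1 <= (n.-1)%:R :> R by rewrite ler1n -ltnS prednK //; case: n n2.
have e0 : 0 <= (1 - q) ^+ n.-1 by rewrite exprn_ge0 //; lra.
set m := (n.-1)%:R in nx m1 *; set e := (1 - q) ^+ _ in e0 *.
move=> h.
have : e * (n%:R * q) <= 2 by rewrite nx; nra.
rewrite /ff -/e => h2.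
have xp : 0 < n%:R * q by lra.
have : e <= 2 / (n%:R * q) by rewrite ler_pdivlMr.
lra.
Qed.

Lemma Phi_ge0 K q i : 0 <= q <= 1 -> 0 <= Phi K q i.
Proof.
elim: K q i => [|K IH] q i hq //=.
have hqp j : 0 <= q * p i j <= 1.
  move: hq (hp i j) => /andP[q0 q1] /andP[p0 p1].
  by apply/andP; split; [apply: mulr_ge0; lra | apply: mulr_ile1; lra].
rewrite addr_ge0 ?ff_ge0 // addr_ge0 // mulr_ge0 ?IH //; exact: ltW (andP (hp _ _)).1.
Qed.


Definition cc := (1 - rho)^-1.
Definition AA := cc + (- ln dlt + hM) / HH.
Definition Bup (x : R) (i : bool) :=
  if 1 <= x then (ln x + hh i) / HH + AA else cc * x.

Lemma cc_gt0 : 0 < cc.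
Proof. by rewrite /cc invr_gt0 subr_gt0 rho_lt1. Qed.

Lemma cc_eq : cc * (1 - rho) = 1.
Proof. by rewrite /cc mulVf // gt_eqF // subr_gt0 rho_lt1. Qed.

Lemma lndlt_le0 : ln dlt <= 0.
Proof. apply: ln_le0; have := dlt_le_p false false; have := hp false false; move=> /andP[_ ?]; lra. Qed.

Lemma ln_p_ge i j : ln dlt <= ln (p i j).
Proof.
by rewrite ler_ln ?dlt_le_p // posrE ?dlt_gt0 ?(andP (hp _ _)).1.
Qed.

Lemma HH_gt0 : 0 < HH. Proof. exact: H_gt0. Qed.

Lemma divH_ge0 (a : R) : 0 <= a -> 0 <= a / HH.
Proof. by move=> a0; rewrite divr_ge0 // ltW // HH_gt0. Qed.

Lemma Bup_ge0 x i : 0 < x -> 0 <= Bup x i.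
Proof.
move=> x0; rewrite /Bup; case: ifP => x1; last by rewrite mulr_ge0 // ltW // cc_gt0.
have lx : 0 <= ln x by exact: ln_ge0.
have := hh_ge i; have := lndlt_le0; have := cc_gt0.
move=> ? ? ?.
have : 0 <= (ln x + hh i - ln dlt + hM) / HH by apply: divH_ge0; lra.
rewrite /AA !mulrDl. lra.
Qed.

Lemma Bup_step x i j : 1 <= x ->
  Bup (x * p i j) j <= (ln x + ln (p i j) + hh j) / HH + AA.
Proof.
move=> x1; have [p0 p1] := andP (hp i j).
rewrite /Bup; case: ifP => xp1.
  by rewrite lnM // posrE; lra.
have lx : 0 <= ln x by exact: ln_ge0.
have := hh_ge j; have := ln_p_ge i j.
move=> ? ?.
have : 0 <= (ln x + ln (p i j) - ln dlt + hh j + hM) / HH by apply: divH_ge0; lra.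
have : cc * (x * p i j) <= cc.
  by rewrite ger_pMr ?cc_gt0 //; lra.
rewrite /AA !mulrDl. lra.
Qed.

Lemma qp_bound q i j : 0 < q <= 1 -> 0 < q * p i j <= 1.
Proof.
move=> /andP[q0 q1]; have [p0 p1] := andP (hp i j).
apply/andP; split; first exact: mulr_gt0.
by apply: mulr_ile1; lra.
Qed.

Lemma Phi_up K q i : 0 < q <= 1 -> Phi K q i <= Bup (n%:R * q) i.
Proof.
elim: K q i => [|K IH] q i hq /=.
  by apply: Bup_ge0; rewrite mulr_gt0 ?n_gt0 //; case/andP: hq.
have hq' : 0 <= q <= 1 by case/andP: hq => q0 ->; rewrite ltW.
have I0 := IH _ false (@qp_bound q i false hq).
have I1 := IH _ true (@qp_bound q i true hq).
rewrite !mulrA in I0 I1.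
have [a0 a1] := andP (hp i false); have [b0 b1] := andP (hp i true).
have J0 := ler_wpM2l (ltW a0) I0.
have J1 := ler_wpM2l (ltW b0) I1.
have fu := @ff_le1 q hq'; have fl := @ff_le q hq'.
rewrite {1}/Bup; case: ifP => x1.
  have K0 := ler_wpM2l (ltW a0) (Bup_step _ i false x1).
  have K1 := ler_wpM2l (ltW b0) (Bup_step _ i true x1).
  have := key i (n%:R * q) AA. lra.
have x1' : n%:R * q < 1 by rewrite ltNge x1.
have xp j : ~~ (1 <= n%:R * q * p i j).
  have [c0 c1] := andP (hp i j); rewrite -ltNge.
  apply: le_lt_trans x1'; rewrite ger_pMr ?ltW //.
  by rewrite mulr_gt0 ?n_gt0 //; case/andP: hq.
move: J0 J1; rewrite /Bup (negbTE (xp false)) (negbTE (xp true)) => J0 J1.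
have r0 := p_le_rho i false; have r1 := p_le_rho i true.
have ce := cc_eq; have c0 := cc_gt0.
have x0 : 0 < n%:R * q by rewrite mulr_gt0 ?n_gt0 //; case/andP: hq.
set x := n%:R * q in J0 J1 fl x1' x0 *.
have e0 : p i false * (cc * (x * p i false)) <= cc * x * (p i false * rho).
  have -> : p i false * (cc * (x * p i false)) = (cc * x * p i false) * p i false by ring.
  have -> : cc * x * (p i false * rho) = (cc * x * p i false) * rho by ring.
  apply: ler_wpM2l => //; apply: mulr_ge0; [apply: mulr_ge0|]; apply: ltW => //.
have e1 : p i true * (cc * (x * p i true)) <= cc * x * (p i true * rho).
  have -> : p i true * (cc * (x * p i true)) = (cc * x * p i true) * p i true by ring.
  have -> : cc * x * (p i true * rho) = (cc * x * p i true) * rho by ring.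
  apply: ler_wpM2l => //; apply: mulr_ge0; [apply: mulr_ge0|]; apply: ltW => //.
have e2 : cc * x * (p i false * rho) + cc * x * (p i true * rho) = cc * x * rho.
  by rewrite -mulrDr -mulrDl hs mul1r.
have e3 : cc * x = x + cc * x * rho.
  by rewrite -{2}(mul1r x) -ce; ring.
lra.
Qed.


Definition MM := 2 / (1 - rho).
Definition AL := hM / HH.
Definition Ef (y : R) := if 1 <= y then MM * (2 - y^-1) else 0.
Definition Blo (x : R) (i : bool) := (ln x + hh i) / HH - AL - Ef x.

Lemma MM_eq : MM * (1 - rho) = 2.
Proof. by rewrite /MM mulfVK // gt_eqF // subr_gt0 rho_lt1. Qed.

Lemma MM_ge2 : 2 <= MM.
Proof.
have r := rho_lt1; have r0 : 0 <= rho by apply: le_trans (p_le_rho false false); exact: ltW (andP (hp _ _)).1.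
have := MM_eq; nra.
Qed.

Lemma Ef_le x : Ef x <= 2 * MM.
Proof.
rewrite /Ef; case: ifP => x1; last by have := MM_ge2; lra.
have : 0 <= x^-1 by rewrite invr_ge0; lra.
have := MM_ge2 => ? ?.
have : 0 <= MM * x^-1 by apply: mulr_ge0; lra.
rewrite mulrBr; lra.
Qed.

Lemma Ef_step x i j : 1 <= x -> Ef (x * p i j) <= Ef x - 2 / x.
Proof.
move=> x1; have [p0 p1] := andP (hp i j).
have u0 : 0 < x^-1 by rewrite invr_gt0; lra.
have u1 : x^-1 <= 1 by rewrite invf_le1 //; lra.
have m2 := MM_ge2; have me := MM_eq.
rewrite /Ef x1; case: ifP => xp1.
  2: have : 0 <= (MM - 2) * (2 - x^-1) by apply: mulr_ge0; lra.
  2: move=> hh2; nra.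
rewrite invfM.
set u := x^-1 in u0 u1 *.
set w := (p i j)^-1.
have pw : p i j * w = 1 by rewrite /w mulfV // gt_eqF.
have pr := p_le_rho i j.
have r1 := rho_lt1.
have w2 : 2 - rho <= w.
  have : (2 - rho) * p i j <= p i j * w.
    rewrite pw.
    have h1 : 0 <= (2 - rho) * (rho - p i j) by apply: mulr_ge0; lra.
    have h2 : 0 <= (1 - rho) * (1 - rho) by apply: mulr_ge0; lra.
    nra.
  by rewrite mulrC ler_pM2l.
have h3 : 0 <= MM * u * (w - 2 + rho) by apply: mulr_ge0; [apply: mulr_ge0|]; lra.
have h4 : MM * u * (1 - rho) = 2 * u by rewrite -mulrA [u * _]mulrC mulrA me.
change (MM * (2 - u * w) <= MM * (2 - u) - 2 * u). nra.
Qed.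

Lemma Phi_lo K q i : 0 < q <= 1 -> 1 <= n%:R * q -> n%:R * q * rho ^+ K < 1 ->
  Blo (n%:R * q) i <= Phi K q i.
Proof.
elim: K q i => [|K IH] q i hq x1 xr /=.
  by move: xr; rewrite expr0 mulr1 ltNge x1.
have hq' : 0 <= q <= 1 by case/andP: hq => q0 ->; rewrite ltW.
have x0 : 0 < n%:R * q by lra.
have step j : p i j * ((ln (n%:R * q) + ln (p i j) + hh j) / HH - AL - Ef (n%:R * q * p i j))
    <= p i j * Phi K (q * p i j) j.
  have [c0 c1] := andP (hp i j).
  apply: ler_wpM2l; first exact: ltW.
  have [xp1|xp1] := leP 1 (n%:R * q * p i j).
    have := IH (q * p i j) j (qp_bound q i j hq); rewrite !mulrA => I.
    rewrite -lnM ?posrE //; apply: I => //.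
    apply: le_lt_trans xr; rewrite exprS mulrA ler_pM2r.
      by rewrite ler_pM2l // p_le_rho.
    by rewrite exprn_gt0 // (lt_le_trans c0 (p_le_rho i j)).
  have pge : 0 <= Phi K (q * p i j) j.
    by apply: Phi_ge0; have := qp_bound q i j hq; case/andP=> a b; rewrite b ltW.
  rewrite /Ef (_ : (1 <= n%:R * q * p i j) = false) ?subr0; last by rewrite leNgt xp1.
  have l0 : ln (n%:R * q * p i j) < 0 by apply: ln_lt0; rewrite xp1 mulr_gt0.
  rewrite -lnM ?posrE //.
  have hj := hh_le j.
  have : (ln (n%:R * q * p i j) + hh j) / HH - hM / HH <= 0.
    by rewrite -mulrBl; apply: mulr_le0_ge0; [lra | rewrite invr_ge0 ltW // HH_gt0].
  rewrite /AL; lra.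
have S0 := step false; have S1 := step true.
have E0 := ler_wpM2l (ltW (andP (hp i false)).1) (Ef_step _ i false x1).
have E1 := ler_wpM2l (ltW (andP (hp i true)).1) (Ef_step _ i true x1).
have F := @ff_ge q hq x1.
have kk := key i (n%:R * q) (- AL).
have e2 : p i false * (Ef (n%:R * q) - 2 / (n%:R * q)) + p i true * (Ef (n%:R * q) - 2 / (n%:R * q))
   = Ef (n%:R * q) - 2 / (n%:R * q) by rewrite -mulrDl hs mul1r.
rewrite /Blo.
lra.
Qed.

Definition U0 := hM / HH + AA + cc.
Definition L0 := (1 + hM) / HH + AL + 2 * MM.

Lemma AA_ge0 : 0 <= AA.
Proof.
rewrite /AA; have := cc_gt0; have := lndlt_le0; have := hM_ge0 => ? ? ?.
have : 0 <= (- ln dlt + hM) / HH by apply: divH_ge0; lra.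
lra.
Qed.

Lemma Ef_ge0 x : 0 <= Ef x.
Proof.
rewrite /Ef; case: ifP => // x1; have := MM_ge2 => ?.
have : x^-1 <= 1 by rewrite invf_le1 //; lra.
move=> ?; apply: mulr_ge0; lra.
Qed.

Lemma lnn_ge0 : 0 <= ln (n%:R : R).
Proof. by apply: ln_ge0; rewrite ler1n; case: n n2. Qed.

Lemma up_b K m b : 0 <= m <= 1 -> m * Phi K m b <= m * ln (n%:R : R) / HH + U0.
Proof.
move=> /andP[m0 m1].
have hMH : 0 <= hM / HH by apply: divH_ge0; exact: hM_ge0.
have ca := cc_gt0; have aa := AA_ge0.
have lnn := lnn_ge0.
have lnnH : 0 <= m * ln (n%:R : R) / HH by apply: divH_ge0; apply: mulr_ge0.
rewrite /U0.
have [->|mp] := eqVneq m 0; first by rewrite !mul0r; lra.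
have mp0 : 0 < m by rewrite lt_neqAle eq_sym mp m0.
have hmq : 0 < m <= 1 by rewrite mp0 m1.
have := @Phi_up K m b hmq; rewrite /Bup; case: ifP => x1 up.
  have e : ln (n%:R * m) = ln (n%:R : R) + ln m by rewrite lnM // posrE ?n_gt0.
  rewrite e in up.
  have lm : ln m <= 0 by apply: ln_le0.
  have h1 : m * ln m <= 0 by apply: mulr_ge0_le0.
  have h2 : m * hh b <= hM.
    have := hh_le b; have := hM_ge0 => ? ?.
    have : m * hh b <= m * hM by apply: ler_wpM2l.
    have : m * hM <= hM by rewrite ler_piMl.
    lra.
  have h3 : (m * ln m + m * hh b) / HH <= hM / HH.
    by apply: ler_wpM2r; [rewrite invr_ge0 ltW // HH_gt0 | lra].
  have h4 : m * AA <= AA by rewrite ler_piMl.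
  have := ler_wpM2l m0 up.
  have -> : m * ((ln (n%:R : R) + ln m + hh b) / HH + AA) =
    m * ln (n%:R : R) / HH + (m * ln m + m * hh b) / HH + m * AA by ring.
  lra.
have x1' : n%:R * m < 1 by rewrite ltNge x1.
have : m * Phi K m b <= m * (cc * (n%:R * m)) by apply: ler_wpM2l.
have : m * (cc * (n%:R * m)) <= cc.
  have -> : m * (cc * (n%:R * m)) = cc * (m * (n%:R * m)) by ring.
  rewrite ger_pMr //.
  have nm0 : 0 <= n%:R * m by apply: mulr_ge0 => //; exact: ltW n_gt0.
  have : m * (n%:R * m) <= 1 * 1 by apply: ler_pM; lra.
  lra.
lra.
Qed.

Lemma lo_b K m b : 0 <= m <= 1 -> n%:R * rho ^+ K < 1 ->
  m * ln (n%:R : R) / HH - L0 <= m * Phi K m b.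
Proof.
move=> /andP[m0 m1] nr.
have hMH : 0 <= hM / HH by apply: divH_ge0; exact: hM_ge0.
have m2 := MM_ge2.
have AL0 : 0 <= AL by exact: hMH.
have lnn := lnn_ge0.
have H1 : 0 <= 1 / HH by apply: divH_ge0.
rewrite /L0.
have [x1|x1] := leP 1 (n%:R * m); last first.
  have pg : 0 <= Phi K m b by apply: Phi_ge0; rewrite m0 m1.
  have : m * ln (n%:R : R) <= 1.
    have := ln_sublinear n_gt0 => ?.
    have : m * ln (n%:R : R) <= m * n%:R by apply: ler_wpM2l => //; lra.
    lra.
  move=> h.
  have : m * ln (n%:R : R) / HH <= 1 / HH.
    by apply: ler_wpM2r => //; rewrite invr_ge0 ltW // HH_gt0.
  have : 0 <= m * Phi K m b by apply: mulr_ge0.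
  have -> : (1 + hM) / HH = 1 / HH + hM / HH by rewrite mulrDl.
  lra.
have mp0 : 0 < m.
  rewrite lt_neqAle eq_sym m0 andbT; apply/eqP => m00; move: x1; rewrite m00 mulr0; lra.
have hmq : 0 < m <= 1 by rewrite mp0 m1.
have xr : n%:R * m * rho ^+ K < 1.
  apply: le_lt_trans nr; rewrite -mulrA [m * _]mulrC mulrA ler_piMr //.
  by apply: mulr_ge0; [apply: ltW; exact: n_gt0 | apply: exprn_ge0; apply: le_trans (p_le_rho false false); exact: ltW (andP (hp _ _)).1].
have lo := @Phi_lo K m b hmq x1 xr.
rewrite /Blo lnM ?posrE ?n_gt0 // in lo.
have h1 : - 1 <= m * ln m.
  have := ln_sublinear (x := m^-1); rewrite invr_gt0 => /(_ mp0).
  rewrite lnV ?posrE // => h.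
  have : m * (- ln m) <= m * m^-1 by apply: ler_wpM2l => //; exact: ltW.
  rewrite mulfV ?gt_eqF //. lra.
have h2 : - hM <= m * hh b.
  have := hh_ge b; have := hM_ge0 => ? ?.
  have : m * (- hM) <= m * hh b by apply: ler_wpM2l.
  have : - hM <= m * (- hM) by rewrite mulrN lerN2 ler_piMl.
  lra.
have h3 : - (1 + hM) / HH <= (m * ln m + m * hh b) / HH.
  by apply: ler_wpM2r; [rewrite invr_ge0 ltW // HH_gt0 | lra].
have h4 : m * AL <= AL by rewrite ler_piMl.
have h5 : m * Ef (n%:R * m) <= 2 * MM.
  apply: le_trans (Ef_le (n%:R * m)); apply: ler_piMl => //; exact: Ef_ge0.
have := ler_wpM2l m0 lo.
have -> : m * ((ln (n%:R : R) + ln m + hh b) / HH - AL - Ef (n%:R * m)) =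
    m * ln (n%:R : R) / HH + (m * ln m + m * hh b) / HH - m * AL - m * Ef (n%:R * m) by ring.
have -> : (1 + hM) / HH = - (- (1 + hM) / HH) by rewrite mulNr opprK.
lra.
Qed.


Lemma U0_ge0 : 0 <= U0.
Proof.
rewrite /U0; have := AA_ge0; have := cc_gt0 => ? ?.
have : 0 <= hM / HH by apply: divH_ge0; exact: hM_ge0.
lra.
Qed.

Lemma L0_ge0 : 0 <= L0.
Proof.
rewrite /L0; have := MM_ge2 => ?.
have : 0 <= (1 + hM) / HH by apply: divH_ge0; have := hM_ge0; lra.
have : 0 <= AL by apply: divH_ge0; exact: hM_ge0.
lra.
Qed.

Lemma total_up K (mu : bool -> R) : (forall i, 0 <= mu i) -> mu false + mu true = 1 ->
  1 + (mu false * Phi K (mu false) false + mu true * Phi K (mu true) true)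
  <= ln (n%:R : R) / HH + (1 + 2 * U0).
Proof.
move=> m0 ms.
have b0 : 0 <= mu false <= 1 by rewrite m0 /=; have := m0 true; lra.
have b1 : 0 <= mu true <= 1 by rewrite m0 /=; have := m0 false; lra.
have := @up_b K _ false b0; have := @up_b K _ true b1.
have -> : ln (n%:R : R) / HH = mu false * ln (n%:R : R) / HH + mu true * ln (n%:R : R) / HH.
  by rewrite -!mulrA -mulrDl ms mul1r.
lra.
Qed.

Lemma exK : exists K, n%:R * rho ^+ K < 1.
Proof.
have r1 := rho_lt1.
have r0 : 0 <= rho by apply: le_trans (p_le_rho false false); exact: ltW (andP (hp _ _)).1.
set K := (Num.truncn (n%:R / (1 - rho))).+1; exists K.
have h : 0 <= 1 - rho <= 1 by apply/andP; split; lra.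
have := @bern_inv R (1 - rho) K h; rewrite opprB addrCA subrr addr0 => b.
have t := truncnS_gt (n%:R / (1 - rho)); rewrite -/K in t.
have : n%:R < K%:R * (1 - rho) by rewrite -ltr_pdivrMr // subr_gt0.
have e0 : 0 <= rho ^+ K by rewrite exprn_ge0.
move=> h2.
have : n%:R * rho ^+ K < (1 + K%:R * (1 - rho)) * rho ^+ K.
  rewrite ltr_pM2r //; first lra.
  rewrite lt_neqAle e0 andbT eq_sym expf_neq0 //.
  by rewrite gt_eqF // (lt_le_trans (andP (hp false false)).1 (p_le_rho false false)).
lra.
Qed.

Lemma total_lo (mu : bool -> R) : (forall i, 0 <= mu i) -> mu false + mu true = 1 ->
  exists K, ln (n%:R : R) / HH + (1 - 2 * L0) <=
    1 + (mu false * Phi K (mu false) false + mu true * Phi K (mu true) true).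
Proof.
move=> m0 ms; have [K hK] := exK; exists K.
have b0 : 0 <= mu false <= 1 by rewrite m0 /=; have := m0 true; lra.
have b1 : 0 <= mu true <= 1 by rewrite m0 /=; have := m0 false; lra.
have := @lo_b K _ false b0 hK; have := @lo_b K _ true b1 hK.
have -> : ln (n%:R : R) / HH = mu false * ln (n%:R : R) / HH + mu true * ln (n%:R : R) / HH.
  by rewrite -!mulrA -mulrDl ms mul1r.
lra.
Qed.


Fixpoint Qw (i : bool) (s : seq bool) : R :=
  if s is b :: s' then p i b * Qw b s' else 1.

Lemma sum_tuple0 (F : 0.-tuple bool -> R) : \sum_(t : 0.-tuple bool) F t = F [tuple].
Proof.
rewrite (eq_bigr (fun=> F [tuple])); last by move=> t _; rewrite tuple0.
by rewrite sumr_const card_tuple expn0 mulr1n.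
Qed.

Lemma sum_tuple_cons k (F : k.+1.-tuple bool -> R) :
  \sum_(t : k.+1.-tuple bool) F t =
  \sum_(b : bool) \sum_(t : k.-tuple bool) F (cons_tuple b t).
Proof.
rewrite pair_big /=.
rewrite (reindex (fun x : bool * k.-tuple bool => cons_tuple x.1 x.2)) //=.
exists (fun t => (thead t, behead_tuple t)) => [[b t] _|t _] /=.
  by congr pair; apply: val_inj.
by rewrite [RHS]tuple_eta; apply: val_inj.
Qed.

Lemma Qw_cons k i b (t : k.-tuple bool) : Qw i (cons_tuple b t) = p i b * Qw b t.
Proof. by []. Qed.

Lemma sumQ k i : \sum_(t : k.-tuple bool) Qw i t = 1.
Proof.
elim: k i => [|k IH] i; first by rewrite sum_tuple0.
have e b : \sum_(t : k.-tuple bool) Qw i (cons_tuple b t) = p i b.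
  by rewrite -[RHS]mulr1 -(IH b) mulr_sumr; apply: eq_bigr.
by rewrite sum_tuple_cons big_bool /= !e addrC hs.
Qed.

Definition Ak k q i := \sum_(t : k.-tuple bool) Qw i t * ff (q * Qw i t).

Lemma Ak0 q i : Ak 0 q i = ff q.
Proof. by rewrite /Ak sum_tuple0 /= mul1r mulr1. Qed.

Lemma Ak_rec k q i : Ak k.+1 q i =
  p i false * Ak k (q * p i false) false + p i true * Ak k (q * p i true) true.
Proof.
rewrite /Ak sum_tuple_cons big_bool addrC !mulr_sumr; congr (_ + _);
  by apply: eq_bigr => t _; rewrite Qw_cons !mulrA.
Qed.

Lemma Phi_sum K q i : \sum_(k < K) Ak k q i = Phi K q i.
Proof.
elim: K q i => [|K IH] q i; first by rewrite big_ord0.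
rewrite big_ord_recl Ak0 /=; congr (_ + _).
under eq_bigr do rewrite Ak_rec.
by rewrite big_split /= -!mulr_sumr !IH.
Qed.

Definition mprob (mu : bool -> R) {k} (t : k.-tuple bool) : R :=
  markov_prefix_prob mu p k (fun l => nth false t l).

Lemma prodQ (s : seq bool) b :
  \prod_(l < size s) p (nth false (b :: s) l) (nth false (b :: s) l.+1) = Qw b s.
Proof.
elim: s b => [|c s IH] b /=; first by rewrite big_ord0.
by rewrite big_ord_recl /= IH.
Qed.

Lemma mprob0 mu (t : 0.-tuple bool) : mprob mu t = 1.
Proof. by []. Qed.

Lemma mprob_cons mu k b (t : k.-tuple bool) :
  mprob mu (cons_tuple b t) = mu b * Qw b t.
Proof.
rewrite /mprob /markov_prefix_prob /=; congr (_ * _).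
by rewrite -(prodQ t b) size_tuple.
Qed.

Lemma sum_m mu k : mu false + mu true = 1 -> \sum_(t : k.-tuple bool) mprob mu t = 1.
Proof.
move=> ms; case: k => [|k]; first by rewrite sum_tuple0.
have e b : \sum_(t : k.-tuple bool) mprob mu (cons_tuple b t) = mu b.
  rewrite -[RHS]mulr1 -(sumQ k b) mulr_sumr; apply: eq_bigr => t _.
  exact: mprob_cons.
by rewrite sum_tuple_cons big_bool /= !e addrC.
Qed.

Definition ak mu k := \sum_(t : k.-tuple bool) mprob mu t * ff (mprob mu t).

Lemma a_sum mu K : \sum_(k < K.+1) ak mu k =
  1 + (mu false * Phi K (mu false) false + mu true * Phi K (mu true) true).
Proof.
rewrite big_ord_recl; congr (_ + _).
  rewrite /ak sum_tuple0 mprob0 mul1r /ff subrr expr0n /=.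
  by case: n n2 => [|[|m]] //= _; rewrite subr0.
rewrite -!Phi_sum !mulr_sumr -big_split /=; apply: eq_bigr => k _.
rewrite /ak sum_tuple_cons big_bool addrC /Ak !mulr_sumr; congr (_ + _);
  by apply: eq_bigr => t _; rewrite mprob_cons !mulrA.
Qed.


Lemma mprob_ge0 mu k (t : k.-tuple bool) : (forall i, 0 <= mu i) -> 0 <= mprob mu t.
Proof.
move=> m0; rewrite /mprob /markov_prefix_prob; case: k t => // k t.
apply: mulr_ge0 => //; apply: prodr_ge0 => l _; exact: ltW (andP (hp _ _)).1.
Qed.

Lemma mprob_le1 mu k (t : k.-tuple bool) : (forall i, 0 <= mu i) -> mu false + mu true = 1 ->
  mprob mu t <= 1.
Proof.
move=> m0 ms; rewrite -(@sum_m mu k ms) (bigD1 t) //= lerDl.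
by apply: sumr_ge0 => u _; exact: mprob_ge0.
Qed.

Lemma ak_ge0 mu k : (forall i, 0 <= mu i) -> mu false + mu true = 1 -> 0 <= ak mu k.
Proof.
move=> m0 ms; apply: sumr_ge0 => t _; apply: mulr_ge0; first exact: mprob_ge0.
by apply: ff_ge0; rewrite mprob_ge0 // mprob_le1.
Qed.

End Analytic2.

Section Comb.
Variable R : realType.
Variable n : nat.
Variable U : finType.
Variable m : U -> R.
Hypothesis msum : \sum_t m t = 1.
Variable j : 'I_n.

Definition Pg : pred {ffun 'I_n -> U} := fun c => [exists i, (i != j) && (c i == c j)].

Lemma total_prod : \sum_(c : {ffun 'I_n -> U}) \prod_i m (c i) = 1.
Proof.
rewrite -(bigA_distr_bigA (fun (i : 'I_n) (u : U) => m u)) /=.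
by rewrite (eq_bigr (fun _ => 1)) ?prodr_const ?expr1n // => i _.
Qed.

Definition Fb (t : U) (i : 'I_n) (u : U) : R :=
  if i == j then (u == t)%:R * m u else (u != t)%:R * m u.

Lemma sumFb t i : \sum_u Fb t i u = if i == j then m t else 1 - m t.
Proof.
rewrite /Fb; case: (i == j).
  rewrite (bigD1 t) //= eqxx mul1r big1 ?addr0 // => u /negbTE ->; by rewrite mul0r.
rewrite -[X in _ = X - _]msum (bigD1 t) //= eqxx mul0r add0r [X in _ = X - _](bigD1 t) //=.
rewrite [m t + _]addrC addrK; apply: eq_bigr => u ut; rewrite ut; by rewrite mul1r.
Qed.

Lemma prodFb_c (c : {ffun 'I_n -> U}) :
  \sum_t \prod_i Fb t i (c i) = (~~ Pg c)%:R * \prod_i m (c i).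
Proof.
rewrite (bigD1 (c j)) //= [X in _ + X]big1 ?addr0; last first.
  move=> t tn; rewrite (bigD1 j) //= /Fb eqxx.
  by rewrite [c j == t]eq_sym (negbTE tn) mul0r mul0r.
case: (boolP (Pg c)) => hP /=.
  move: (hP) => /existsP [i0 /andP [i0j /eqP ci]].
  rewrite mul0r (bigD1 i0) //= /Fb (negbTE i0j) ci eqxx /= mul0r mul0r //.
rewrite mul1r; apply: eq_bigr => i _; rewrite /Fb.
case: (boolP (i == j)) => [/eqP ->|ij]; first by rewrite eqxx mul1r.
suff -> : c i != c j by rewrite mul1r.
apply: contra hP => e; apply/existsP; exists i; by rewrite ij e.
Qed.

Lemma bad_sum : \sum_(c : {ffun 'I_n -> U} | ~~ Pg c) \prod_i m (c i) =
  \sum_t m t * (1 - m t) ^+ n.-1.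
Proof.
transitivity (\sum_t \prod_i \sum_u Fb t i u); last first.
  apply: eq_bigr => t _; under eq_bigr do rewrite sumFb.
  rewrite (bigD1 j) //= eqxx; congr (_ * _).
  rewrite (eq_bigr (fun _ => 1 - m t)); last by move=> i /negbTE ->.
  by rewrite prodr_const cardC1 card_ord.
under [RHS]eq_bigr do rewrite (bigA_distr_bigA (Fb _)).
rewrite exchange_big /=; rewrite [RHS](eq_bigr _ (fun c _ => prodFb_c c)).
by rewrite big_mkcond /=; apply: eq_bigr => c _; case: (Pg c); rewrite ?mul0r ?mul1r.
Qed.

Lemma good_sum : \sum_(c : {ffun 'I_n -> U} | Pg c) \prod_i m (c i) =
  \sum_t m t * (1 - (1 - m t) ^+ n.-1).
Proof.
have := total_prod; rewrite (bigID Pg) /= bad_sum => h.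
have -> : \sum_t m t * (1 - (1 - m t) ^+ n.-1) = \sum_t m t - \sum_t m t * (1 - m t) ^+ n.-1.
  by rewrite -sumrB; apply: eq_bigr => t _; rewrite mulrBr mulr1.
by rewrite msum -[X in X - _]h addrK.
Qed.

End Comb.

Section Prob.
Variable R : realType.
Variables (p : bool -> bool -> R) (mu : bool -> R) (n : nat).
Variables (d : measure_display) (T : measurableType d) (P : probability T R).
Variable X : 'I_n -> T -> nat -> bool.
Hypothesis HX : is_markov_strings mu p P X.

Definition Cyl {k} (c : {ffun 'I_n -> k.-tuple bool}) : set T :=
  [set w | forall (j : 'I_n) (l : nat), (l < k)%N -> X j w l = nth false (c j) l].

Lemma meas_forall_seq (I : eqType) (s : seq I) (Q : I -> set T) :
  (forall x, measurable (Q x)) -> measurable [set w | forall x, x \in s -> Q x w].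
Proof.
move=> mQ; elim: s => [|a s IH].
  have -> : [set w | forall x, x \in [::] -> Q x w] = setT.
    by apply/seteqP; split => w //= _ x; rewrite in_nil.
  exact: measurableT.
have -> : [set w | forall x, x \in a :: s -> Q x w] =
    Q a `&` [set w | forall x, x \in s -> Q x w].
  apply/seteqP; split => w /=.
    move=> h; split; first by apply: h; rewrite mem_head.
    by move=> x xs; apply: h; rewrite in_cons xs orbT.
  by case=> qa h x; rewrite in_cons => /orP [/eqP -> // | xs]; exact: h.
exact: measurableI.
Qed.

Lemma meas_Xeq j l b : measurable [set w | X j w l = b].
Proof.
have m1 := HX.1 j l.
case: b => //.
have -> : [set w | X j w l = false] = ~` [set w | X j w l].
  by apply/seteqP; split => w /=; [move=> -> | case: (X j w l)].
exact: measurableC.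
Qed.

Lemma Cyl_meas k c : measurable (@Cyl k c).
Proof.
have -> : Cyl c = [set w | forall j, j \in enum 'I_n ->
   [set w | forall l, l \in iota 0 k -> X j w l = nth false (c j) l] w].
  apply/seteqP; split => w /= h j.
    by move=> _ l; rewrite mem_iota add0n => /andP[_ lk]; exact: h.
  by move=> l lk; apply: h; [rewrite mem_enum | rewrite mem_iota add0n lk].
apply: meas_forall_seq => j; apply: meas_forall_seq => l; exact: meas_Xeq.
Qed.

Lemma Cyl_prob k c : P (@Cyl k c) = (\prod_j mprob R p mu (c j))%:E.
Proof. exact: (HX.2 k (fun j l => nth false (c j) l)). Qed.

Definition Eev k (j : 'I_n) : set T :=
  [set w | exists i, i != j /\ forall l, (l < k)%N -> X i w l = X j w l].

Lemma Eev_cup k j : Eev k j = \bigcup_(c in [set` Pg n (k.-tuple bool) j]) @Cyl k c.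
Proof.
apply/seteqP; split => w.
  case => i [ij eq].
  exists [ffun i => [tuple X i w l | l < k]].
    rewrite /= /Pg; apply/existsP; exists i; rewrite ij /=; apply/eqP; rewrite !ffunE.
    by apply: eq_from_tnth => l; rewrite !tnth_mktuple; apply: eq; exact: ltn_ord.
  move=> j' l lk; rewrite ffunE.
  by have := nth_mktuple (fun l : 'I_k => X j' w l) false (Ordinal lk) => /= ->.
case => c /= /existsP [i /andP [ij /eqP e]] hw.
by exists i; split => // l lk; rewrite !hw // e.
Qed.

Lemma Cyl_triv k (D : set {ffun 'I_n -> k.-tuple bool}) : trivIset D (@Cyl k).
Proof.
move=> c c' _ _ [w [h1 h2]]; apply/ffunP => i.
apply: eq_from_tnth => l; rewrite !(tnth_nth false).
by rewrite -h1 ?ltn_ord // h2 ?ltn_ord.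
Qed.

Lemma Eev_meas k j : measurable (Eev k j).
Proof.
rewrite Eev_cup; apply: fin_bigcup_measurable; first exact: finite_finset.
by move=> c _; exact: Cyl_meas.
Qed.

Lemma Eev_prob k j : P (Eev k j) =
  (\sum_(c | Pg n (k.-tuple bool) j c) \prod_i mprob R p mu (c i))%:E.
Proof.
rewrite Eev_cup (measure_fin_bigcup _ finite_finset (Cyl_triv _ _) (fun c _ => Cyl_meas _ c)).
rewrite -(bigfs _ _ (r := enum {ffun 'I_n -> k.-tuple bool})) ?enum_uniq //; last first.
  by move=> c _; rewrite mem_enum.
rewrite big_enum_cond /= -sumEFin; apply: eq_bigr => c _; exact: Cyl_prob.
Qed.


Lemma depth_series j w :
  depth R X j w = (\sum_(k <oo) (\1_(Eev k j) w)%:E)%E.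
Proof.
set S := [set k : nat | forall i : 'I_n, i != j ->
        exists l : nat, (l < k)%N /\ X i w l != X j w l].
have SE k : S k <-> ~ Eev k j w.
  split.
    move=> h [i [ij e]]; have [l [lk ne]] := h i ij.
    by rewrite e ?eqxx in ne.
  move=> h i ij; apply: contrapT => nh; apply: h; exists i; split => // l lk.
  apply/eqP; apply: contrapT => ne; apply: nh; exists l; split => //; exact/negP.
have mono k k' : (k <= k')%N -> S k -> S k'.
  move=> kk' h i ij; have [l [lk ne]] := h i ij; exists l; split => //.
  exact: leq_trans lk kk'.
have i1 k : ~ S k -> (\1_(Eev k j) w)%:E = 1%E :> \bar R.
  move=> nS; rewrite indicE mem_set //; apply: contrapT => ne; apply: nS; exact/SE.
have i0 k : S k -> (\1_(Eev k j) w)%:E = 0%E :> \bar R.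
  by move=> hS; rewrite indicE memNset //; apply/SE.
rewrite /depth -/S.
have [[m0 Sm0]|noS] := pselect (exists k, S k).
  have ex : exists k, `[< S k >] by exists m0; exact/asboolP.
  case: (ex_minnP ex) => m /asboolP Sm minm.
  have -> : ereal_inf [set (k%:R)%:E | k in S] = (m%:R)%:E :> \bar R.
    apply/eqP; rewrite eq_le; apply/andP; split.
      by apply: ereal_inf_lbound; exists m.
    apply: le_ereal_inf_tmp => _ [k Sk <-]; rewrite lee_fin ler_nat.
    by apply: minm; exact/asboolP.
  apply/esym; apply: lim_near_cst => //; near=> N.
  have mN : (m <= N)%N by near: N; exists m.
  rewrite (big_cat_nat (n:=m)) //=.
  rewrite [X in (_ + X)%E]big_nat_cond [X in (_ + X)%E]big1 ?adde0; last first.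
    by move=> k /andP [/andP [mk _] _]; apply: i0; exact: mono Sm.
  rewrite big_nat_cond (eq_bigr (fun=> 1%:E)); last first.
    move=> k /andP [/andP [_ km] _]; apply: i1 => Sk.
    by have := minm k (asboolT Sk); rewrite leqNgt km.
  by rewrite -big_nat_cond sumEFin sumr_const_nat subn0.
have -> : [set (k%:R)%:E | k in S] = set0 :> set (\bar R).
  by apply/seteqP; split => // x [k Sk _]; apply: noS; exists k.
rewrite ereal_inf0.
have H (N : nat) : (((N%:R)%:E : \bar R) <= \sum_(k <oo) (\1_(Eev k j) w)%:E)%E.
  have h : ((\sum_(0 <= k < N) (\1_(Eev k j) w)%:E : \bar R) <= \sum_(k <oo) (\1_(Eev k j) w)%:E)%E.
    by apply: nneseries_lim_ge => k _ _; rewrite lee_fin indicE.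
  apply: le_trans h.
  rewrite big_nat_cond (eq_bigr (fun=> 1%:E)); last first.
    by move=> k _; apply: i1 => Sk; apply: noS; exists k.
  by rewrite -big_nat_cond sumEFin sumr_const_nat subn0.
move: H; case: (\sum_(k <oo) _)%E => [r| //|] H.
  have := H (Num.truncn r).+1; rewrite lee_fin => h.
  by have := truncnS_gt r; rewrite ltNge h.
by have := H 0%N.
Unshelve. all: by end_near.
Qed.

Lemma integral_bucket :
  (\int[P]_w bucket_ops R X w = \sum_(k <oo) \sum_(j < n) P (Eev k j))%E.
Proof.
transitivity (\int[P]_w \sum_(k <oo) \sum_(j < n) ((\1_(Eev k j) w)%:E : \bar R))%E.
  apply: eq_integral => w _; rewrite /bucket_ops.
  under eq_bigr do rewrite depth_series.
  by rewrite nneseries_sum // => j' k _; rewrite lee_fin indicE.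
rewrite integral_nneseries //; first last.
- by move=> k w _; apply: sume_ge0 => j' _; rewrite lee_fin indicE.
- move=> k; apply: emeasurable_sum => j'.
  by apply/measurable_EFinP; apply: measurable_indic; exact: Eev_meas.
apply: eq_eseriesr => k _.
rewrite ge0_integral_sum //.
all: try (by move=> j'; apply/measurable_EFinP; apply: measurable_indic; exact: Eev_meas).
all: try (by move=> j' w _; rewrite lee_fin indicE).
by apply: eq_bigr => j' _; rewrite integral_indic ?setIT //; exact: Eev_meas.
Qed.

End Prob.

Arguments U0 {R}. Arguments L0 {R}. Arguments ak {R}. Arguments Phi {R}. Arguments ff {R}.
Arguments U0_ge0 {R p}. Arguments L0_ge0 {R p}. Arguments integral_bucket {R p mu n d T P X}.
Arguments Eev_prob {R p mu n d T P X}. Arguments good_sum {R n U m}. Arguments sum_m {R p}.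
Arguments ak_ge0 {R p}. Arguments total_up {R p}. Arguments total_lo {R p}. Arguments a_sum {R p}.
Arguments H_gt0 {R p}. Arguments Eev {n d T}.

Theorem theorem5p1 (R : realType) (p : bool -> bool -> R) :
  (forall i j, 0 < p i j < 1) ->
  (forall i, p i false + p i true = 1) ->
  (exists i j, p i j != 2^-1) ->
  exists (C : R) (N : nat), forall n : nat, (N <= n)%N ->
  forall mu : bool -> R, (forall i, 0 <= mu i) -> mu false + mu true = 1 ->
  forall (d : measure_display) (T : measurableType d) (P : probability T R)
         (X : 'I_n -> T -> nat -> bool),
  is_markov_strings mu p P X ->
  (`| (\int[P]_w bucket_ops R X w) - ((n%:R * ln (n%:R)) / entropy p)%:E |
     <= (C * n%:R)%:E)%E.
Proof.
move=> hp hs _.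
exists (1 + 2 * U0 p + 2 * L0 p), 2%N => n n2 mu m0 ms d T P X HX.
rewrite (integral_bucket HX).
have Pk k : (\sum_(j < n) P (Eev X k j))%E = ((n%:R * ak p n mu k)%:E).
  transitivity (\sum_(j < n) (ak p n mu k)%:E)%E.
    apply: eq_bigr => j _; rewrite (Eev_prob HX) (good_sum (sum_m hs mu k ms)).
    by rewrite /ak /ff.
  by rewrite sumEFin sumr_const card_ord mulr_natl.
rewrite (eq_eseriesr (fun k _ => Pk k)).
set L := ln (n%:R : R) / entropy p.
have a0 k : 0 <= ak p n mu k by exact: ak_ge0.
have n0 : 0 < n%:R :> R by rewrite ltr0n; exact: ltnW n2.
have u0 := U0_ge0 hp; have l0 := L0_ge0 hp.
have lnn : 0 <= L.
  by apply: divr_ge0; [apply: ln_ge0; rewrite ler1n; exact: ltnW n2 | exact: ltW (H_gt0 hp)].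
have ps K : \sum_(0 <= k < K.+1) (n%:R * ak p n mu k) =
    n%:R * (1 + (mu false * Phi p n K (mu false) false + mu true * Phi p n K (mu true) true)).
  by rewrite -mulr_sumr big_mkord (a_sum _ n2).
set S := (\sum_(k <oo) _)%E.
have cv : cvgn (fun K => (\sum_(0 <= k < K) (n%:R * ak p n mu k)%:E)%E).
  by apply: is_cvg_nneseries => k _ _; rewrite lee_fin mulr_ge0 // ltW.
have up : (S <= (n%:R * (L + (1 + 2 * U0 p)))%:E)%E.
  apply: (lime_le cv); apply: nearW => K.
  rewrite sumEFin lee_fin; case: K => [|K].
    by rewrite big_geq //; apply: mulr_ge0; [exact: ltW | lra].
  rewrite ps; apply: ler_wpM2l; first exact: ltW.
  exact: total_up.
have [K hK] := total_lo hp hs _ n2 _ m0 ms.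
have lo : ((n%:R * (L + (1 - 2 * L0 p)))%:E <= S)%E.
  apply: le_trans (nneseries_lim_ge K.+1 _); last first.
    by move=> k _ _; rewrite lee_fin mulr_ge0 // ltW.
  rewrite sumEFin lee_fin ps; apply: ler_wpM2l; first exact: ltW.
  exact: hK.
have Sfin : S \is a fin_num.
  by rewrite fin_numE; apply/andP; split; apply/eqP => e; rewrite e in up lo.
rewrite -(fineK Sfin) in up lo *.
set s := fine S in up lo *.
rewrite lee_fin in up; rewrite lee_fin in lo.
rewrite -EFinB abse_EFin lee_fin.
have -> : n%:R * ln (n%:R : R) / entropy p = n%:R * L by rewrite /L mulrA.
rewrite ler_norml; apply/andP; split.
  have e : n%:R * (L + (1 - 2 * L0 p)) = n%:R * L + n%:R * (1 - 2 * L0 p) by ring.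
  have : 0 <= n%:R * L0 p by apply: mulr_ge0; [exact: ltW|].
  have : 0 <= n%:R * U0 p by apply: mulr_ge0; [exact: ltW|].
  rewrite e in lo. nra.
have e : n%:R * (L + (1 + 2 * U0 p)) = n%:R * L + n%:R * (1 + 2 * U0 p) by ring.
have : 0 <= n%:R * L0 p by apply: mulr_ge0; [exact: ltW|].
have : 0 <= n%:R * U0 p by apply: mulr_ge0; [exact: ltW|].
rewrite e in up. nra.
Qed.
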